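(* Let $k\ge 1$ and let $G=K_{n_1,n_2,\dots,n_p}$ be a complete $p$-partite graph with $\delta(G)\ge k$ and $n_1\le n_2\le\dots\le n_p$. Suppose the set \[ M=\{x\in\mathbb{Z}_{>0} : \text{there is an integer } \ell \text{ with } 2\le \ell\le p,\ (\ell-1)x=k,\ x\le\min\{k,n_1,\dots,n_\ell\}\} \] is nonempty. Then $\gamma_{\times k,t}(G)\le k+\min M$.
   Context: A set $S\subseteq V(G)$ is a $k$-tuple total dominating set ($k$TDS) of a graph $G$ with $\delta(G)\ge k$ if $|N_G(x)\cap S|\ge k$ for every $x\in V(G)$. The $k$-tuple total domination number $\gamma_{\times k,t}(G)$ is the minimum cardinality of a $k$TDS of $G$. $K_{n_1,\dots,n_p}$ denotes the complete $p$-partite graph with parts of sizes $n_1,\dots,n_p$. *)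

(* Defs.v *)
From mathcomp Require Import all_boot.
Set Implicit Arguments. Unset Strict Implicit. Unset Printing Implicit Defensive.

Definition nbhd (T : finType) (e : rel T) (x : T) : {set T} := [set y | e x y].

Definition min_deg_ge (T : finType) (e : rel T) (k : nat) : Prop :=
  forall x : T, k <= #|nbhd e x|.

Definition kTDS (T : finType) (e : rel T) (k : nat) (S : {set T}) : bool :=
  [forall x, k <= #|nbhd e x :&: S|].

(* k-tuple total domination number: minimum cardinality of a kTDS
   (defaults to #|T| when none exists; under min degree >= k, setT is one). *)
Definition ktdn (T : finType) (e : rel T) (k : nat) : nat :=
  \big[minn/#|T|]_(S : {set T} | kTDS e k S) #|S|.

(* Complete p-partite graph K_{n_1,...,n_p}: vertex (i, j) is the j-th vertex
   of part i (parts indexed 0..p-1); two vertices adjacent iff in different parts. *)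
Definition cmp_vertex (p : nat) (n : 'I_p -> nat) : finType :=
  {i : 'I_p & 'I_(n i)}.

Definition cmp_adj (p : nat) (n : 'I_p -> nat) : rel (cmp_vertex n) :=
  fun u v => tag u != tag v.

(* Membership in M: x > 0 and there is l with 2 <= l <= p, (l-1) x = k,
   x <= min{k, n_1, ..., n_l}  (n_1..n_l are the parts with 0-based index < l). *)
Definition inM (p : nat) (n : 'I_p -> nat) (k x : nat) : bool :=
  (0 < x) &&
  [exists l : 'I_p.+1,
     [&& 2 <= l, (l.-1 * x == k), x <= k &
         [forall i : 'I_p, (i < l) ==> (x <= n i)]]].

(* min M (elements of M are at most k). *)
Definition minM (p : nat) (n : 'I_p -> nat) (k : nat) : nat :=
  \big[minn/k]_(x < k.+1 | inM n k x) x.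

(* Main.v *)
Require Import Defs.
From mathcomp Require Import all_boot.

Lemma cnt_lt (m x : nat) : x <= m -> #|[set j : 'I_m | j < x]| = x.
Proof.
move=> le; rewrite -sum1_card.
rewrite (eq_bigl (fun j : 'I_m => true && (j < x))); last by move=> j; rewrite inE.
by rewrite (big_ord_narrow_cond le) sum1_card card_ord.
Qed.

Lemma cnt_sig (p : nat) (n : 'I_p -> nat) (A : {set 'I_p}) (x : nat) :
  (forall i, i \in A -> x <= n i) ->
  #|[set w : cmp_vertex n | (tag w \in A) && (tagged w < x)]| = #|A| * x.
Proof.
move=> H; rewrite -sum1_card.
rewrite (eq_bigl (fun w : cmp_vertex n => (tag w \in A) && (tagged w < x)));
  last by move=> w; rewrite inE.
rewrite -(sig_big_dep (fun i => i \in A) (fun i (j : 'I_(n i)) => j < x)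
           (fun i (j : 'I_(n i)) => 1)) /=.
rewrite (eq_bigr (fun _ => x)); last first.
  by move=> i iA; rewrite sum1_card; rewrite -{2}(cnt_lt _ _ (H i iA));
     apply: eq_card => j; rewrite inE.
by rewrite sum_nat_const.
Qed.

Lemma main_x (p : nat) (n : 'I_p -> nat) (k x : nat) :
  inM n k x -> ktdn (@cmp_adj p n) k <= k + x.
Proof.
case/andP=> x0 /existsP[l /and4P[l2 /eqP lx xk /forallP Hl]].
have lp : l <= p by rewrite -ltnS ltn_ord.
pose A := [set i : 'I_p | i < l].
have HA : forall i, i \in A -> x <= n i.
  by move=> i; rewrite inE => il; exact: (implyP (Hl i) il).
have cA : #|A| = l by rewrite cnt_lt.
pose S := [set w : cmp_vertex n | (tag w \in A) && (tagged w < x)].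
have kS : kTDS (@cmp_adj p n) k S.
  apply/forallP=> v.
  have -> : nbhd (@cmp_adj p n) v :&: S =
            [set w : cmp_vertex n | (tag w \in A :\ tag v) && (tagged w < x)].
    apply/setP=> w; rewrite !inE /cmp_adj eq_sym.
    by case: (tag w != tag v); rewrite ?andbF.
  rewrite cnt_sig; last by move=> i; rewrite inE => /andP[_]; exact: HA.
  rewrite -lx; apply: leq_mul => //.
  have := cardsD1 (tag v) A; rewrite cA => ->.
  by case: (tag v \in A) => //=; rewrite ?addnK ?leq_pred.
have cS : #|S| = k + x.
  by rewrite cnt_sig // cA -lx -{1}(prednK (ltnW l2)) mulSn addnC.
rewrite /ktdn -cS.
have : S \in index_enum {set cmp_vertex n} by rewrite mem_index_enum.
elim: (index_enum _) => [|a r IH] //; rewrite inE big_cons => /orP[/eqP <-|Sr].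
  by rewrite kS geq_minl.
case: (kTDS _ _ a) => /=; last exact: IH.
have H2 := IH Sr. eapply leq_trans; [apply: geq_minr | exact: H2].
Qed.

Theorem mainTheorem5 (p : nat) (n : 'I_p -> nat) (k : nat) :
  1 <= k ->
  (forall i : 'I_p, 0 < n i) ->
  (forall i j : 'I_p, i <= j -> n i <= n j) ->
  min_deg_ge (@cmp_adj p n) k ->
  (exists x, inM n k x) ->
  ktdn (@cmp_adj p n) k <= k + minM n k.
Proof.
move=> _ _ _ _ [x0 Hx0].
have xk : x0 <= k.
  by case/andP: Hx0 => _ /existsP[l /and4P[_ _ ? _]].
rewrite /minM; apply: (big_ind (fun y => ktdn (@cmp_adj p n) k <= k + y)).
- by apply: (leq_trans (main_x _ _ _ _ Hx0)); rewrite leq_add2l.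
- by move=> a b Ha Hb; rewrite /minn; case: ifP.
- by move=> i Hi; exact: main_x _ _ _ _ Hi.
Qed.
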